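(* For every integer $k\ge1$ and all $a,b\in\mathbb{C}$ such that $\frac{a+k+1}{2}$ and $\frac{a+k+m}{2}$ ($m=0,1,\dots,k$) are not nonpositive integers, $$\frac{\Gamma\!\left(\frac{a+k+1}{2}\right)}{\Gamma\!\left(\frac{a-k+1}{2}-b\right)}=\sum_{m=0}^{k}\binom{k}{m}\left(a+\frac{k-1}{2}-\frac{bm}{k}-\frac{(k+1)(a+k-1)}{2(m+1)}\right)\frac{\Gamma\!\left(\frac{a+k+m}{2}\right)}{\Gamma\!\left(\frac{a-k+m}{2}-b+1\right)}.$$
   Context: $\Gamma$ is Euler's gamma function; $1/\Gamma$ is understood as the entire function (equal to $0$ at nonpositive integers). *)

(* Defs.v *)
From Stdlib Require Import Reals Arith Lra Lia Classical ClassicalEpsilon.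
Open Scope R_scope.

Record Cpx : Type := mkC { Re : R ; Im : R }.

Definition RtoC (x : R) : Cpx := mkC x 0.
Definition Cpx0 : Cpx := RtoC 0.
Definition Cpx1 : Cpx := RtoC 1.
Definition Cadd (z w : Cpx) : Cpx := mkC (Re z + Re w) (Im z + Im w).
Definition Copp (z : Cpx) : Cpx := mkC (- Re z) (- Im z).
Definition Csub (z w : Cpx) : Cpx := Cadd z (Copp w).
Definition Cmul (z w : Cpx) : Cpx :=
  mkC (Re z * Re w - Im z * Im w) (Re z * Im w + Im z * Re w).
Definition Cnorm2 (z : Cpx) : R := Re z * Re z + Im z * Im z.
Definition Cinv (z : Cpx) : Cpx := mkC (Re z / Cnorm2 z) (- Im z / Cnorm2 z).
Definition Cdiv (z w : Cpx) : Cpx := Cmul z (Cinv w).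
Definition Cabs (z : Cpx) : R := sqrt (Cnorm2 z).
Definition Cexp (z : Cpx) : Cpx := mkC (exp (Re z) * cos (Im z)) (exp (Re z) * sin (Im z)).
(* n ^ z for a natural number n >= 1, principal branch: exp (z ln n) *)
Definition Cnatpow (n : nat) (z : Cpx) : Cpx := Cexp (Cmul z (RtoC (ln (INR n)))).

Fixpoint Csum (f : nat -> Cpx) (n : nat) : Cpx :=
  match n with O => f O | S p => Cadd (Csum f p) (f (S p)) end.
Fixpoint Cprod (f : nat -> Cpx) (n : nat) : Cpx :=
  match n with O => f O | S p => Cmul (Cprod f p) (f (S p)) end.

Definition Ccv (u : nat -> Cpx) (l : Cpx) : Prop :=
  forall eps : R, eps > 0 -> exists N : nat, forall n : nat, (n >= N)%nat ->
    Cabs (Csub (u n) l) < eps.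

(* Gauss' product: z(z+1)...(z+n) / (n! n^z), which tends to 1/Gamma(z) for
   every complex z. *)
Definition gauss_seq (z : Cpx) (n : nat) : Cpx :=
  Cdiv (Cprod (fun j => Cadd z (RtoC (INR j))) n)
       (Cmul (RtoC (INR (fact n))) (Cnatpow n z)).

(* 1/Gamma, the entire reciprocal Gamma function (0 at nonpositive integers) *)
Definition rgamma (z : Cpx) : Cpx :=
  epsilon (inhabits Cpx0) (fun w => Ccv (gauss_seq z) w).

(* Euler's Gamma function (meaningful off the nonpositive integers) *)
Definition Gamma (z : Cpx) : Cpx := Cinv (rgamma z).

Definition nonpos_int (z : Cpx) : Prop := exists n : nat, z = RtoC (- INR n).

(* Main.v *)
Require Import Defs.
From Stdlib Require Import Reals Arith Lra Lia Psatz Classical ClassicalEpsilon Field.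
Open Scope R_scope.

Lemma Ceq (z w : Cpx) : Re z = Re w -> Im z = Im w -> z = w.
Proof. destruct z, w; simpl; intros -> ->; reflexivity. Qed.

Ltac ceq := apply Ceq; simpl.

Lemma Cring : ring_theory Cpx0 Cpx1 Cadd Cmul Csub Copp (@eq Cpx).
Proof.
  constructor; intros; ceq; unfold Cpx0, Cpx1, RtoC; simpl; ring.
Qed.

Lemma Cnorm2_0 z : Cnorm2 z = 0 -> z = Cpx0.
Proof.
  unfold Cnorm2; destruct z as [x y]; simpl; intros H.
  assert (x = 0) by nra. assert (y = 0) by nra. subst. reflexivity.
Qed.

Lemma Cfield : field_theory Cpx0 Cpx1 Cadd Cmul Csub Copp Cdiv Cinv (@eq Cpx).
Proof.
  constructor.
  - exact Cring.
  - intro H. apply (f_equal Re) in H. simpl in H. lra.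
  - reflexivity.
  - intros z Hz. assert (Cnorm2 z <> 0) by (intro E; apply Hz, Cnorm2_0, E).
    ceq; unfold Cnorm2 in *; simpl; field; auto.
Qed.

Add Field CpxField : Cfield.

Goal forall z w : Cpx, w <> Cpx0 -> Cmul (Cdiv z w) w = z.
Proof. intros. field. auto. Qed.

Definition FE := forall z, rgamma z = Cmul z (rgamma (Cadd z Cpx1)).

Lemma Cinv0 : Cinv Cpx0 = Cpx0.
Proof. unfold Cinv, Cnorm2, Cpx0, RtoC; simpl. unfold Rdiv. replace (0*0+0*0) with 0 by ring. rewrite Rinv_0. f_equal; ring. Qed.

Lemma Cinv_div w : Cinv w = Cdiv Cpx1 w.
Proof. unfold Cdiv; ring. Qed.

Lemma Cinv_mul z w : Cinv (Cmul z w) = Cmul (Cinv z) (Cinv w).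
Proof.
  destruct (classic (z = Cpx0)) as [->|Hz].
  { replace (Cmul Cpx0 w) with Cpx0 by (ceq; unfold Cpx0; simpl; ring).
    rewrite Cinv0. ceq; unfold Cpx0; simpl; ring. }
  destruct (classic (w = Cpx0)) as [->|Hw].
  { replace (Cmul z Cpx0) with Cpx0 by (ceq; unfold Cpx0; simpl; ring).
    rewrite Cinv0. ceq; unfold Cpx0; simpl; ring. }
  assert (Hzw : Cmul z w <> Cpx0).
  { intro E. apply (f_equal (fun u => Cmul u (Cmul (Cinv z) (Cinv w)))) in E.
    replace (Cmul (Cmul z w) (Cmul (Cinv z) (Cinv w))) with Cpx1 in E by (field; auto).
    apply (f_equal Re) in E. unfold Cpx0, Cpx1 in E; simpl in E. lra. }
  rewrite !(Cinv_div (Cmul z w)), (Cinv_div z), (Cinv_div w).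
  field. auto.
Qed.

Lemma Gamma_succ (F : FE) z : z <> Cpx0 -> Gamma (Cadd z Cpx1) = Cmul z (Gamma z).
Proof.
  intros Hz. unfold Gamma. rewrite (F z). rewrite Cinv_mul.
  assert (H: Cmul z (Cinv z) = Cpx1) by (rewrite Cinv_div; field; auto).
  transitivity (Cmul (Cmul z (Cinv z)) (Cinv (rgamma (Cadd z Cpx1)))); [rewrite H; ring | ring].
Qed.

Lemma Cdiv_RtoC z r : r <> 0 -> Cdiv z (RtoC r) = mkC (Re z / r) (Im z / r).
Proof. intros H. unfold Cdiv, Cinv, Cnorm2, RtoC; simpl. apply Ceq; simpl; field; auto. Qed.


Lemma Csum_ext f g n : (forall m, (m <= n)%nat -> f m = g m) -> Csum f n = Csum g n.
Proof.
  induction n; intros H; simpl.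
  - apply H; lia.
  - rewrite IHn by (intros; apply H; lia). rewrite (H (S n)) by lia. reflexivity.
Qed.

Lemma Csum_tele f n :
  Csum (fun m => Csub (f m) (f (S (S m)))) n =
  Csub (Csub (Cadd (f O) (f 1%nat)) (f (S n))) (f (S (S n))).
Proof. induction n; simpl. - ring. - rewrite IHn. ring. Qed.

Lemma C_k_1 k : (1 <= k)%nat -> Binomial.C k 1 = INR k.
Proof.
  intros Hk. destruct k as [|k']; [lia|]. unfold Binomial.C.
  replace (S k' - 1)%nat with k' by lia. rewrite fact_simpl, mult_INR.
  simpl (fact 1). simpl (INR 1). field. apply INR_fact_neq_0.
Qed.

Section Main.
Definition Am (a : Cpx) (k m : nat) := Cdiv (Cadd a (RtoC (INR k + INR m))) (RtoC 2).
Definition Bm (a b : Cpx) (k m : nat) :=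
  Csub (Cdiv (Cadd a (RtoC (- INR k + INR m))) (RtoC 2)) b.
Definition mu (k j : nat) : R :=
  if (j <=? k)%nat then Binomial.C k j * INR j / INR k else 0.

Lemma Am_SS a k m : Am a k (S (S m)) = Cadd (Am a k m) Cpx1.
Proof.
  unfold Am. rewrite !Cdiv_RtoC by lra. rewrite !S_INR. apply Ceq; simpl; field.
Qed.
Lemma Bm_SS a b k m : Bm a b k (S (S m)) = Cadd (Bm a b k m) Cpx1.
Proof.
  unfold Bm. rewrite !Cdiv_RtoC by lra. rewrite !S_INR. apply Ceq; simpl; field.
Qed.

Lemma mu_SS k m : (1 <= k)%nat -> (m <= k)%nat ->
  mu k (S (S m)) = Binomial.C k m * ((INR k - INR m) * (INR k - INR m - 1)) / (INR k * (INR m + 1)).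
Proof.
  intros Hk Hm. unfold mu.
  assert (HK : INR k <> 0) by (apply not_0_INR; lia).
  destruct (Nat.leb_spec (S (S m)) k) as [H|H].
  - destruct (Nat.le_exists_sub (S (S m)) k H) as [d [-> _]].
    unfold Binomial.C.
    replace (d + S (S m) - S (S m))%nat with d by lia.
    replace (d + S (S m) - m)%nat with (S (S d)) by lia.
    rewrite !fact_simpl, !mult_INR, !plus_INR, !S_INR.
    pose proof (pos_INR d); pose proof (pos_INR m).
    pose proof (INR_fact_neq_0 d); pose proof (INR_fact_neq_0 m).
    field. repeat split; lra.
  - assert (m = k \/ S m = k)%nat as [->| <-] by lia.
    + pose proof (pos_INR k). field_simplify; [lra| ]. split; lra.
    + rewrite S_INR. pose proof (pos_INR m). field_simplify; [lra|]. repeat split; lra.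
Qed.
End Main.

Definition coef (a b : Cpx) (k m : nat) :=
  Csub (Csub (Cadd a (RtoC ((INR k - 1) / 2)))
                     (Cdiv (Cmul b (RtoC (INR m))) (RtoC (INR k))))
               (Cdiv (Cmul (RtoC (INR k + 1)) (Cadd a (RtoC (INR k - 1))))
                     (RtoC (2 * (INR m + 1)))).

Lemma coef_id a b k m : (1 <= k)%nat -> (m <= k)%nat ->
  Cmul (RtoC (Binomial.C k m)) (coef a b k m) =
  Csub (Cmul (RtoC (mu k m)) (Bm a b k m)) (Cmul (RtoC (mu k (S (S m)))) (Am a k m)).
Proof.
  intros Hk Hm. rewrite mu_SS by auto. unfold mu.
  rewrite (proj2 (Nat.leb_le _ _) Hm).
  generalize (Binomial.C k m) as X. intros X.
  assert (HK : INR k <> 0) by (apply not_0_INR; lia).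
  pose proof (pos_INR m).
  unfold coef, Am, Bm. rewrite !Cdiv_RtoC by lra.
  apply Ceq; simpl; field; lra.
Qed.

Definition Rt a b k j := Cmul (RtoC (mu k j)) (Cmul (Gamma (Am a k j)) (rgamma (Bm a b k j))).

Lemma term_id (F : FE) a b k m : (1 <= k)%nat -> (m <= k)%nat ->
  (forall m : nat, (m <= k)%nat ->
     ~ nonpos_int (Cdiv (Cadd a (RtoC (INR k + INR m))) (RtoC 2))) ->
  Cmul (RtoC (Binomial.C k m)) (Cmul (coef a b k m)
     (Cmul (Gamma (Am a k m)) (rgamma (Cadd (Bm a b k m) Cpx1))))
  = Csub (Rt a b k m) (Rt a b k (S (S m))).
Proof.
  intros Hk Hm Hnp. unfold Rt. rewrite Am_SS, Bm_SS, (F (Bm a b k m)).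
  set (G := Gamma (Am a k m)). set (r1 := rgamma (Cadd (Bm a b k m) Cpx1)).
  transitivity (Cmul (Cmul (RtoC (Binomial.C k m)) (coef a b k m)) (Cmul G r1)); [ring|].
  rewrite coef_id by auto.
  destruct (Nat.leb_spec (S (S m)) k) as [H|H].
  - rewrite (Gamma_succ F).
    + unfold G. ring.
    + intro E. apply (Hnp m Hm). exists O. change (Am a k m = RtoC (- INR 0)).
      rewrite E. unfold Cpx0, RtoC. simpl INR. f_equal. ring.
  - assert (E: mu k (S (S m)) = 0) by (unfold mu; rewrite (proj2 (Nat.leb_gt _ _) H); reflexivity).
    rewrite E. change (RtoC 0) with Cpx0. ring.
Qed.

Theorem main_from_FE (F : FE) (k : nat) (a b : Cpx) :
  (1 <= k)%nat ->
  ~ nonpos_int (Cdiv (Cadd a (RtoC (INR k + 1))) (RtoC 2)) ->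
  (forall m : nat, (m <= k)%nat ->
     ~ nonpos_int (Cdiv (Cadd a (RtoC (INR k + INR m))) (RtoC 2))) ->
  Cmul (Gamma (Cdiv (Cadd a (RtoC (INR k + 1))) (RtoC 2)))
       (rgamma (Csub (Cdiv (Cadd a (RtoC (- INR k + 1))) (RtoC 2)) b))
  = Csum (fun m =>
      Cmul (RtoC (Binomial.C k m))
       (Cmul
         (Csub (Csub (Cadd a (RtoC ((INR k - 1) / 2)))
                     (Cdiv (Cmul b (RtoC (INR m))) (RtoC (INR k))))
               (Cdiv (Cmul (RtoC (INR k + 1)) (Cadd a (RtoC (INR k - 1))))
                     (RtoC (2 * (INR m + 1)))))
         (Cmul (Gamma (Cdiv (Cadd a (RtoC (INR k + INR m))) (RtoC 2)))
               (rgamma (Cadd (Csub (Cdiv (Cadd a (RtoC (- INR k + INR m))) (RtoC 2)) b)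
                             Cpx1))))) k.
Proof.
  intros Hk _ Hnp.
  rewrite (Csum_ext _ (fun m => Csub (Rt a b k m) (Rt a b k (S (S m)))))
    by (intros m Hm; exact (term_id F a b k m Hk Hm Hnp)).
  rewrite Csum_tele.
  assert (Z : forall j, (k < j)%nat -> Rt a b k j = Cpx0).
  { intros j Hj. unfold Rt, mu. rewrite (proj2 (Nat.leb_gt _ _) Hj).
    change (RtoC 0) with Cpx0. ring. }
  rewrite (Z (S k)), (Z (S (S k))) by lia.
  assert (Z0 : Rt a b k O = Cpx0).
  { unfold Rt, mu. simpl (INR 0). rewrite Rmult_0_r. unfold Rdiv. rewrite Rmult_0_l.
    destruct (0 <=? k)%nat; change (RtoC 0) with Cpx0; ring. }
  assert (M1 : mu k 1 = 1).
  { unfold mu. rewrite (proj2 (Nat.leb_le _ _) Hk), C_k_1 by auto. simpl (INR 1).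
    field. apply not_0_INR; lia. }
  rewrite Z0. unfold Rt. rewrite M1. change (RtoC 1) with Cpx1.
  unfold Am, Bm. simpl (INR 1). ring.
Qed.

Definition N1 (z : Cpx) : R := Rabs (Re z) + Rabs (Im z).

Lemma N1_ge0 z : 0 <= N1 z.
Proof. unfold N1; pose proof (Rabs_pos (Re z)); pose proof (Rabs_pos (Im z)); lra. Qed.

Lemma N1_add z w : N1 (Cadd z w) <= N1 z + N1 w.
Proof. unfold N1; simpl. pose proof (Rabs_triang (Re z) (Re w)); pose proof (Rabs_triang (Im z) (Im w)); lra. Qed.

Lemma N1_sub z w : N1 (Csub z w) <= N1 z + N1 w.
Proof. unfold N1, Csub; simpl. pose proof (Rabs_triang (Re z) (- Re w)); pose proof (Rabs_triang (Im z) (-Im w)).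
  rewrite !Rabs_Ropp in *. lra. Qed.

Lemma N1_mul z w : N1 (Cmul z w) <= N1 z * N1 w.
Proof.
  unfold N1; simpl.
  pose proof (Rabs_triang (Re z * Re w) (- (Im z * Im w))).
  pose proof (Rabs_triang (Re z * Im w) (Im z * Re w)).
  rewrite Rabs_Ropp, !Rabs_mult in *. unfold Rminus. nra.
Qed.

Lemma N1_RtoC r : N1 (RtoC r) = Rabs r.
Proof. unfold N1, RtoC; simpl. rewrite Rabs_R0. ring. Qed.

Lemma Cabs_le_N1 z : Cabs z <= N1 z.
Proof.
  unfold Cabs, Cnorm2, N1. pose proof (N1_ge0 z). unfold N1 in H.
  rewrite <- (sqrt_Rsqr (Rabs (Re z) + Rabs (Im z))) by lra.
  apply sqrt_le_1_alt. unfold Rsqr.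
  assert (E1: Re z * Re z = Rabs (Re z) * Rabs (Re z)) by (rewrite <- Rabs_mult; symmetry; apply Rabs_pos_eq; nra).
  assert (E2: Im z * Im z = Rabs (Im z) * Rabs (Im z)) by (rewrite <- Rabs_mult; symmetry; apply Rabs_pos_eq; nra).
  rewrite E1, E2. pose proof (Rabs_pos (Re z)); pose proof (Rabs_pos (Im z)). nra.
Qed.

Lemma Rabs_Re_le_Cabs z : Rabs (Re z) <= Cabs z.
Proof.
  unfold Cabs, Cnorm2. rewrite <- sqrt_Rsqr_abs. apply sqrt_le_1_alt. unfold Rsqr. nra.
Qed.
Lemma Rabs_Im_le_Cabs z : Rabs (Im z) <= Cabs z.
Proof.
  unfold Cabs, Cnorm2. rewrite <- sqrt_Rsqr_abs. apply sqrt_le_1_alt. unfold Rsqr. nra.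
Qed.

Lemma Rabs_le_inv x a : Rabs x <= a -> -a <= x <= a.
Proof. unfold Rabs; destruct (Rcase_abs x); intros; lra. Qed.

Lemma exp_est a : Rabs a <= 1/2 ->
  Rabs (exp a - 1 - a) <= 2 * a^2 /\ exp a <= 2 /\ Rabs (exp a - 1) <= 2 * Rabs a.
Proof.
  intros Ha. pose proof (exp_ineq1_le a) as h1. pose proof (exp_ineq1_le (-a)) as h2.
  assert (h3 : exp a * exp (-a) = 1) by (rewrite <- exp_plus; replace (a + - a) with 0 by ring; apply exp_0).
  pose proof (exp_pos a). pose proof (exp_pos (-a)).
  apply Rabs_le_inv in Ha.
  assert (h4 : exp a * (1 - a) <= 1) by nra.
  assert (h5 : exp a - 1 - a <= 2 * a^2) by nra.
  assert (h6 : exp a <= 2) by nra.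
  split; [|split; auto].
  - apply Rabs_le; nra.
  - apply Rabs_le. destruct (Rle_dec 0 a).
    + rewrite Rabs_right by lra. nra.
    + rewrite Rabs_left by lra. nra.
Qed.

Lemma sin_pos_est a : 0 <= a <= 1 -> a - a^2 <= sin a <= a.
Proof.
  intros H. destruct (pre_sin_bound a 0 ltac:(lra) ltac:(lra)) as [H1 H2].
  unfold sin_approx in H1, H2. cbn [sum_f_R0 Nat.mul Nat.add] in H1, H2.
  unfold sin_term in H1, H2.
  replace (INR (fact (2*1+1))) with 6 in * by (simpl; ring).
  replace (INR (fact (2*2+1))) with 120 in * by (simpl; ring).
  replace (INR (fact (2*0+1))) with 1 in * by (simpl; ring).
  simpl pow in *.
  assert (h1: 0 <= a*a) by nra.
  assert (h2: a*a <= 1) by nra.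
  assert (h3: 0 <= a*a*a) by nra.
  assert (h4: a*a*a <= a*a) by nra.
  assert (h5: a*a*a*a*a <= a*a*a) by nra.
  split; lra.
Qed.

Lemma sin_est a : Rabs a <= 1 -> Rabs (sin a - a) <= a^2 /\ Rabs (sin a) <= Rabs a.
Proof.
  intros Ha. apply Rabs_le_inv in Ha. destruct (Rle_dec 0 a).
  - destruct (sin_pos_est a ltac:(lra)). assert (0 <= a^2) by nra.
    split; apply Rabs_le; rewrite ?(Rabs_right a) by lra; nra.
  - destruct (sin_pos_est (-a) ltac:(lra)). rewrite sin_neg in *.
    assert (0 <= a^2) by nra.
    split; apply Rabs_le; rewrite ?(Rabs_left a) by lra; nra.
Qed.

Lemma cos_est a : Rabs a <= 2 -> Rabs (cos a - 1) <= a^2 / 2.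
Proof.
  intros Ha. apply Rabs_le_inv in Ha.
  destruct (pre_cos_bound a 0 ltac:(lra) ltac:(lra)) as [H1 H2].
  unfold cos_approx in H1, H2. cbn [sum_f_R0 Nat.mul Nat.add] in H1, H2.
  unfold cos_term in H1, H2.
  replace (INR (fact (2*1))) with 2 in * by (simpl; ring).
  replace (INR (fact (2*2))) with 24 in * by (simpl; ring).
  replace (INR (fact (2*0))) with 1 in * by (simpl; ring).
  simpl pow in *.
  assert (h1: 0 <= a*a) by nra.
  assert (h0: a*a <= 4) by nra.
  assert (h2: a*a*a*a <= 4*(a*a)).
  { replace (a*a*a*a) with ((a*a)*(a*a)) by ring. apply Rmult_le_compat_r; lra. }
  apply Rabs_le; simpl; lra.
Qed.

Lemma Cexp_add u v : Cexp (Cadd u v) = Cmul (Cexp u) (Cexp v).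
Proof. apply Ceq; unfold Cexp; simpl; rewrite exp_plus, ?cos_plus, ?sin_plus; ring. Qed.

Lemma Cexp_nz u : Cexp u <> Cpx0.
Proof.
  intro E. pose proof (f_equal Re E) as E1. pose proof (f_equal Im E) as E2.
  unfold Cexp, Cpx0, RtoC in *; simpl in *.
  pose proof (exp_pos (Re u)). pose proof (sin2_cos2 (Im u)). unfold Rsqr in *.
  apply Rmult_integral in E1. apply Rmult_integral in E2.
  destruct E1, E2; try lra. nra.
Qed.

Lemma Cexp_est w : N1 w <= 1/2 -> N1 (Csub (Csub (Cexp w) Cpx1) w) <= 3 * (N1 w)^2.
Proof.
  intros H. destruct w as [x y]. unfold N1 in *; simpl in *.
  pose proof (Rabs_pos x); pose proof (Rabs_pos y).
  destruct (exp_est x ltac:(lra)) as [e1 [e2 e3]].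
  destruct (sin_est y ltac:(lra)) as [s1 s2].
  pose proof (cos_est y ltac:(lra)) as c1.
  pose proof (exp_pos x).
  assert (R1: exp x * cos y - 1 - x = (exp x - 1 - x) + exp x * (cos y - 1)) by ring.
  assert (R2: exp x * sin y - y = (exp x - 1) * sin y + (sin y - y)) by ring.
  unfold Csub, Cadd, Copp, Cpx1, RtoC; simpl.
  match goal with |- Rabs ?A + Rabs ?B <= _ =>
    replace A with ((exp x - 1 - x) + exp x * (cos y - 1)) by ring;
    replace B with ((exp x - 1) * sin y + (sin y - y)) by ring end.
  pose proof (Rabs_triang (exp x - 1 - x) (exp x * (cos y - 1))).
  pose proof (Rabs_triang ((exp x - 1) * sin y) (sin y - y)).
  rewrite !Rabs_mult in *. rewrite (Rabs_right (exp x)) in * by lra.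
  assert (x^2 = Rabs x * Rabs x) by (rewrite <- Rabs_mult; simpl; rewrite Rmult_1_r; symmetry; apply Rabs_pos_eq; nra).
  assert (y^2 = Rabs y * Rabs y) by (rewrite <- Rabs_mult; simpl; rewrite Rmult_1_r; symmetry; apply Rabs_pos_eq; nra).
  assert (exp x * Rabs (cos y - 1) <= 2 * (y^2/2)).
  { apply Rmult_le_compat; try lra. apply Rabs_pos. }
  assert (Rabs (exp x - 1) * Rabs (sin y) <= (2 * Rabs x) * Rabs y).
  { apply Rmult_le_compat; try lra; apply Rabs_pos. }
  simpl pow in *. nra.
Qed.

Lemma RtoC_add r s : RtoC (r + s) = Cadd (RtoC r) (RtoC s).
Proof. apply Ceq; simpl; ring. Qed.
Lemma RtoC_mul r s : RtoC (r * s) = Cmul (RtoC r) (RtoC s).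
Proof. apply Ceq; simpl; ring. Qed.

Lemma N1_mulR z r : N1 (Cmul z (RtoC r)) = N1 z * Rabs r.
Proof.
  unfold N1; simpl. replace (Re z * r - Im z * 0) with (Re z * r) by ring.
  replace (Re z * 0 + Im z * r) with (Im z * r) by ring. rewrite !Rabs_mult. ring.
Qed.

Definition Kz z := 2 * N1 z + 2 * N1 z ^ 2 + 12 * (1 + N1 z) * N1 z ^ 2.

Lemma est_core z t s : 0 < t -> t * (4 * (N1 z + 1)) <= 1 ->
  Rabs s <= 2 * t -> Rabs (t + s) <= 2 * t^2 ->
  N1 (Csub (Cmul (Cadd Cpx1 (Cmul z (RtoC t))) (Cexp (Cmul z (RtoC s)))) Cpx1)
   <= Kz z * t^2.
Proof.
  intros Ht Htz Hs Hts.
  set (w := Cmul z (RtoC s)).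
  assert (E : Csub (Cmul (Cadd Cpx1 (Cmul z (RtoC t))) (Cexp w)) Cpx1 =
    Cadd (Cadd (Cmul z (RtoC (t+s))) (Cmul (Cmul z (RtoC t)) w))
      (Cmul (Cadd Cpx1 (Cmul z (RtoC t))) (Csub (Csub (Cexp w) Cpx1) w))).
  { unfold w. rewrite RtoC_add. ring. }
  rewrite E.
  pose proof (N1_ge0 z) as Hz.
  assert (Hw : N1 w <= 2 * t * N1 z).
  { unfold w. rewrite N1_mulR. rewrite Rmult_comm. apply Rmult_le_compat_r; lra. }
  assert (Hw2 : N1 w <= 1/2) by nra.
  pose proof (Cexp_est w Hw2) as He.
  pose proof (N1_ge0 w).
  pose proof (N1_ge0 (Csub (Csub (Cexp w) Cpx1) w)).
  eapply Rle_trans; [apply N1_add|].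
  eapply Rle_trans; [apply Rplus_le_compat; [apply N1_add | apply N1_mul]|].
  eapply Rle_trans; [apply Rplus_le_compat; [apply Rplus_le_compat; [apply Req_le, N1_mulR | apply N1_mul] | apply Rle_refl]|].
  rewrite N1_mulR, (Rabs_right t) by lra.
  assert (H1 : N1 (Cadd Cpx1 (Cmul z (RtoC t))) <= 1 + N1 z * t).
  { eapply Rle_trans; [apply N1_add|]. rewrite N1_mulR, (Rabs_right t) by lra.
    unfold N1, Cpx1, RtoC; simpl. rewrite Rabs_R0, Rabs_R1. lra. }
  pose proof (N1_ge0 (Cadd Cpx1 (Cmul z (RtoC t)))).
  assert (T1 : N1 z * Rabs (t + s) <= N1 z * (2 * t^2)) by (apply Rmult_le_compat_l; lra).
  assert (T2 : N1 z * t * N1 w <= N1 z * t * (2 * t * N1 z)) by (apply Rmult_le_compat_l; nra).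
  assert (T3 : N1 w ^ 2 <= (2 * t * N1 z)^2) by (apply pow_incr; lra).
  assert (T4 : N1 (Cadd Cpx1 (Cmul z (RtoC t))) * N1 (Csub (Csub (Cexp w) Cpx1) w)
     <= (1 + N1 z) * (3 * (2 * t * N1 z)^2)).
  { apply Rmult_le_compat; try lra. nra. }
  unfold Kz. simpl pow in *. nra.
Qed.

Lemma s_est n : (1 <= n)%nat ->
  Rabs (ln (INR n) - ln (INR n + 1)) <= 2 * (/ (INR n + 1)) /\
  Rabs (/ (INR n + 1) + (ln (INR n) - ln (INR n + 1))) <= 2 * (/ (INR n + 1))^2.
Proof.
  intros Hn. assert (HN : 1 <= INR n) by (apply (le_INR 1); auto).
  set (N := INR n) in *. set (t := / (N + 1)). set (s := ln N - ln (N + 1)).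
  assert (Ht0 : 0 < t) by (unfold t; apply Rinv_0_lt_compat; lra).
  assert (Ht1 : t <= 1/2).
  { unfold t. apply (Rmult_le_reg_l (N+1)); [lra|]. rewrite Rinv_r by lra. lra. }
  assert (Hes : exp s = 1 - t).
  { unfold s, Rminus. rewrite exp_plus, exp_Ropp, !exp_ln by lra. unfold t. field. lra. }
  assert (Up : s <= -t).
  { destruct (Rle_dec s (-t)) as [?|Hc]; auto. apply Rnot_le_lt in Hc.
    apply exp_increasing in Hc. pose proof (exp_ineq1_le (-t)). lra. }
  assert (Lo : -(t + 2*t^2) <= s).
  { destruct (Rle_dec (-(t + 2*t^2)) s) as [?|Hc]; auto. apply Rnot_le_lt in Hc.
    apply exp_increasing in Hc. rewrite Hes in Hc.
    pose proof (exp_ineq1_le (t + 2*t^2)) as h1.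
    assert (h2 : exp (t + 2*t^2) * exp (-(t + 2*t^2)) = 1)
      by (rewrite <- exp_plus; replace (t + 2*t^2 + - (t + 2*t^2)) with 0 by ring; apply exp_0).
    pose proof (exp_pos (-(t + 2*t^2))).
    assert (h3 : (1 + (t + 2*t^2)) * exp (-(t + 2*t^2)) <= 1) by nra.
    simpl pow in *. nra. }
  split; apply Rabs_le; simpl pow in *; nra.
Qed.

Definition rr z n := Cmul (Cadd Cpx1 (Cmul z (RtoC (/ (INR n + 1)))))
  (Cexp (Cmul z (RtoC (ln (INR n) - ln (INR n + 1))))).

Lemma RtoC_nz r : r <> 0 -> RtoC r <> Cpx0.
Proof. intros H E. apply H. apply (f_equal Re) in E. exact E. Qed.

Lemma Cprod_S f n : Cprod f (S n) = Cmul (Cprod f n) (f (S n)).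
Proof. reflexivity. Qed.

Lemma gauss_step z n : (1 <= n)%nat -> gauss_seq z (S n) = Cmul (gauss_seq z n) (rr z n).
Proof.
  intros Hn. assert (HN : 1 <= INR n) by (apply (le_INR 1); auto).
  unfold gauss_seq, rr, Cnatpow. rewrite Cprod_S. cbv beta.
  rewrite fact_simpl, mult_INR, !S_INR, RtoC_mul.
  set (s := ln (INR n) - ln (INR n + 1)).
  assert (Eq : Cmul z (RtoC (ln (INR n))) = Cadd (Cmul z (RtoC (ln (INR n + 1)))) (Cmul z (RtoC s))).
  { unfold s. apply Ceq; simpl; ring. }
  rewrite Eq, Cexp_add.
  assert (Hinv : RtoC (/ (INR n + 1)) = Cdiv Cpx1 (RtoC (INR n + 1))).
  { rewrite Cdiv_RtoC by lra. apply Ceq; simpl; field; lra. }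
  rewrite Hinv.
  pose proof (Cexp_nz (Cmul z (RtoC (ln (INR n + 1))))).
  pose proof (Cexp_nz (Cmul z (RtoC s))).
  pose proof (RtoC_nz (INR n + 1) ltac:(lra)).
  pose proof (RtoC_nz (INR (fact n)) (INR_fact_neq_0 n)).
  field. repeat split; auto.
Qed.

Lemma Kz_ge0 z : 0 <= Kz z.
Proof. unfold Kz. pose proof (N1_ge0 z). simpl pow. nra. Qed.

Lemma gauss_diff z n : (1 <= n)%nat -> 4 * (N1 z + 1) <= INR n + 1 ->
  N1 (Csub (gauss_seq z (S n)) (gauss_seq z n))
   <= Kz z * N1 (gauss_seq z n) * (/ INR n - / INR (S n)).
Proof.
  intros Hn Hbig. assert (HN : 1 <= INR n) by (apply (le_INR 1); auto).
  rewrite gauss_step by auto.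
  replace (Csub (Cmul (gauss_seq z n) (rr z n)) (gauss_seq z n))
    with (Cmul (gauss_seq z n) (Csub (rr z n) Cpx1)) by ring.
  eapply Rle_trans; [apply N1_mul|].
  destruct (s_est n Hn) as [h1 h2].
  assert (Ht0 : 0 < / (INR n + 1)) by (apply Rinv_0_lt_compat; lra).
  assert (Htz : / (INR n + 1) * (4 * (N1 z + 1)) <= 1).
  { apply (Rmult_le_reg_l (INR n + 1)); [lra|]. rewrite <- Rmult_assoc, Rinv_r by lra. lra. }
  pose proof (est_core z _ _ Ht0 Htz h1 h2) as E.
  unfold rr.
  assert (Ht2 : (/ (INR n + 1))^2 <= / INR n - / INR (S n)).
  { rewrite S_INR. replace (/ INR n - / (INR n + 1)) with (/ (INR n * (INR n + 1))) by (field; lra).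
    simpl pow. rewrite Rmult_1_r, <- Rinv_mult. apply Rinv_le_contravar; nra. }
  pose proof (N1_ge0 (gauss_seq z n)). pose proof (Kz_ge0 z).
  rewrite (Rmult_comm (Kz z)), Rmult_assoc.
  apply Rmult_le_compat_l; auto.
  eapply Rle_trans; [exact E|]. apply Rmult_le_compat_l; auto.
Qed.

Lemma exp_le_mono x y : x <= y -> exp x <= exp y.
Proof. intros [H|H]; [left; apply exp_increasing; auto | right; rewrite H; reflexivity]. Qed.

Lemma ratio_cv (g : nat -> Cpx) (K : R) (N0 : nat) : (1 <= N0)%nat -> 0 <= K ->
  (forall n, (N0 <= n)%nat ->
     N1 (Csub (g (S n)) (g n)) <= K * N1 (g n) * (/ INR n - / INR (S n))) ->
  exists l, Ccv g l.
Proof.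
  intros HN0 HK Hstep.
  assert (INRpos : forall n, (1 <= n)%nat -> 1 <= INR n) by (intros; apply (le_INR 1); auto).
  set (M := N1 (g N0) * exp (K * / INR N0)).
  assert (Bnd1 : forall p, N1 (g (N0 + p)%nat) <= N1 (g N0) * exp (K * (/ INR N0 - / INR (N0 + p)))).
  { induction p.
    - rewrite Nat.add_0_r. replace (K * (/ INR N0 - / INR N0)) with 0 by ring. rewrite exp_0. lra.
    - replace (N0 + S p)%nat with (S (N0 + p)) by lia.
      set (m := (N0 + p)%nat) in *.
      assert (Hm : (N0 <= m)%nat) by (unfold m; lia).
      pose proof (Hstep m Hm) as Hs.
      assert (Hd : 0 <= / INR m - / INR (S m)).
      { rewrite S_INR. pose proof (INRpos m ltac:(lia)).
        replace (/ INR m - / (INR m + 1)) with (/ (INR m * (INR m + 1))) by (field; lra).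
        left; apply Rinv_0_lt_compat; nra. }
      assert (Hg : N1 (g (S m)) <= N1 (g m) * (1 + K * (/ INR m - / INR (S m)))).
      { replace (g (S m)) with (Cadd (g m) (Csub (g (S m)) (g m))) by ring.
        eapply Rle_trans; [apply N1_add|]. nra. }
      pose proof (exp_ineq1_le (K * (/ INR m - / INR (S m)))).
      pose proof (N1_ge0 (g m)).
      eapply Rle_trans; [exact Hg|].
      eapply Rle_trans; [apply Rmult_le_compat_l; [auto| exact H]|].
      eapply Rle_trans; [apply Rmult_le_compat_r; [left; apply exp_pos| exact IHp]|].
      rewrite Rmult_assoc, <- exp_plus. right. f_equal. f_equal. ring. }
  assert (Bnd : forall n, (N0 <= n)%nat -> N1 (g n) <= M).
  { intros n Hn. replace n with (N0 + (n - N0))%nat by lia.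
    eapply Rle_trans; [apply Bnd1|]. unfold M. apply Rmult_le_compat_l; [apply N1_ge0|].
    apply exp_le_mono. pose proof (INRpos (N0 + (n - N0))%nat ltac:(lia)).
    assert (0 < / INR (N0 + (n - N0))) by (apply Rinv_0_lt_compat; lra). nra. }
  assert (HM : 0 <= M) by (unfold M; pose proof (N1_ge0 (g N0)); pose proof (exp_pos (K * / INR N0)); nra).
  assert (Tel : forall n p, (N0 <= n)%nat ->
     N1 (Csub (g (n + p)%nat) (g n)) <= K * M * (/ INR n - / INR (n + p))).
  { intros n p Hn. induction p.
    - rewrite Nat.add_0_r. replace (Csub (g n) (g n)) with Cpx0 by ring.
      unfold N1, Cpx0, RtoC; simpl. rewrite Rabs_R0. right; ring.
    - replace (n + S p)%nat with (S (n + p)) by lia.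
      replace (Csub (g (S (n + p))) (g n)) with
        (Cadd (Csub (g (S (n + p))) (g (n + p)%nat)) (Csub (g (n + p)%nat) (g n))) by ring.
      eapply Rle_trans; [apply N1_add|].
      pose proof (Hstep (n + p)%nat ltac:(lia)).
      pose proof (Bnd (n + p)%nat ltac:(lia)).
      assert (Hd : 0 <= / INR (n+p) - / INR (S (n+p))).
      { rewrite S_INR. pose proof (INRpos (n+p)%nat ltac:(lia)).
        replace (/ INR (n+p) - / (INR (n+p) + 1)) with (/ (INR (n+p) * (INR (n+p) + 1))) by (field; lra).
        left; apply Rinv_0_lt_compat; nra. }
      assert (K * N1 (g (n + p)%nat) * (/ INR (n + p) - / INR (S (n + p))) <=
              K * M * (/ INR (n + p) - / INR (S (n + p)))).
      { apply Rmult_le_compat_r; auto. apply Rmult_le_compat_l; auto. }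
      lra. }
  assert (Cau : forall eps, 0 < eps -> exists N, forall n m, (N <= n)%nat -> (N <= m)%nat ->
     N1 (Csub (g n) (g m)) < eps).
  { intros eps Heps. destruct (INR_unbounded (K * M / eps)) as [N1' HN1'].
    exists (max N0 (S N1')). intros n m Hn Hm.
    assert (key : forall n m, (max N0 (S N1') <= n)%nat -> (n <= m)%nat -> N1 (Csub (g m) (g n)) < eps).
    { clear n m Hn Hm. intros n m Hn Hnm.
      replace m with (n + (m - n))%nat by lia.
      eapply Rle_lt_trans; [apply Tel; lia|].
      pose proof (INRpos n ltac:(lia)).
      assert (INR (S N1') <= INR n) by (apply le_INR; lia). rewrite S_INR in H0.
      assert (0 <= / INR (n + (m - n))) by (left; apply Rinv_0_lt_compat; pose proof (INRpos (n + (m - n))%nat ltac:(lia)); lra).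
      assert (K * M * / INR n < eps).
      { apply (Rmult_lt_reg_r (INR n)); [lra|]. rewrite Rmult_assoc, Rinv_l by lra.
        assert (K * M < eps * INR N1') by (apply (Rmult_lt_reg_r (/ eps)); [apply Rinv_0_lt_compat; lra|];
           replace (eps * INR N1' * / eps) with (INR N1') by (field; lra); exact HN1').
        nra. }
      pose proof (Rmult_le_pos K M HK HM). nra. }
    destruct (le_ge_dec n m).
    - replace (Csub (g n) (g m)) with (Copp (Csub (g m) (g n))) by ring.
      unfold N1 in *; simpl; rewrite !Rabs_Ropp; apply key; auto.
    - apply key; auto. }
  assert (CRe : Cauchy_crit (fun n => Re (g n))).
  { intros eps Heps. destruct (Cau eps Heps) as [N HN]. exists N. intros n m Hn Hm.
    unfold R_dist. pose proof (HN n m Hn Hm). unfold N1, Csub, Cadd, Copp in H; simpl in H.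
    pose proof (Rabs_pos (Im (g n) + - Im (g m))). unfold Rminus. lra. }
  assert (CIm : Cauchy_crit (fun n => Im (g n))).
  { intros eps Heps. destruct (Cau eps Heps) as [N HN]. exists N. intros n m Hn Hm.
    unfold R_dist. pose proof (HN n m Hn Hm). unfold N1, Csub, Cadd, Copp in H; simpl in H.
    pose proof (Rabs_pos (Re (g n) + - Re (g m))). unfold Rminus. lra. }
  destruct (R_complete _ CRe) as [lr Hr]. destruct (R_complete _ CIm) as [li Hi].
  exists (mkC lr li). intros eps Heps.
  destruct (Hr (eps/2) ltac:(lra)) as [Na HNa]. destruct (Hi (eps/2) ltac:(lra)) as [Nb HNb].
  exists (max Na Nb). intros n Hn.
  eapply Rle_lt_trans; [apply Cabs_le_N1|].
  pose proof (HNa n ltac:(lia)). pose proof (HNb n ltac:(lia)). unfold R_dist in *.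
  unfold N1, Csub, Cadd, Copp; simpl. unfold Rminus in *. lra.
Qed.

Lemma gauss_cv z : exists l, Ccv (gauss_seq z) l.
Proof.
  destruct (INR_unbounded (4 * (N1 z + 1))) as [N HN].
  apply (ratio_cv _ (Kz z) (S N)); [lia | apply Kz_ge0|].
  intros n Hn. apply gauss_diff; [lia|].
  assert (INR (S N) <= INR n) by (apply le_INR; auto). rewrite S_INR in H. lra.
Qed.

Definition CcvC (u : nat -> Cpx) l :=
  Un_cv (fun n => Re (u n)) (Re l) /\ Un_cv (fun n => Im (u n)) (Im l).

Lemma Ccv_CcvC u l : Ccv u l -> CcvC u l.
Proof.
  intros H. split; intros eps Heps; destruct (H eps Heps) as [N HN]; exists N; intros n Hn;
  unfold R_dist; eapply Rle_lt_trans; try apply (HN n Hn).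
  - apply (Rabs_Re_le_Cabs (Csub (u n) l)).
  - apply (Rabs_Im_le_Cabs (Csub (u n) l)).
Qed.

Lemma CcvC_unique u l1 l2 : CcvC u l1 -> CcvC u l2 -> l1 = l2.
Proof.
  intros [a1 b1] [a2 b2]. apply Ceq; eapply UL_sequence; eauto.
Qed.

Lemma CcvC_mul u w l m : CcvC u l -> CcvC w m -> CcvC (fun n => Cmul (u n) (w n)) (Cmul l m).
Proof.
  intros [a1 b1] [a2 b2]. split; simpl.
  - apply CV_minus; apply CV_mult; auto.
  - apply CV_plus; apply CV_mult; auto.
Qed.

Lemma CcvC_add u w l m : CcvC u l -> CcvC w m -> CcvC (fun n => Cadd (u n) (w n)) (Cadd l m).
Proof. intros [a1 b1] [a2 b2]. split; simpl; apply CV_plus; auto. Qed.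

Lemma CcvC_const c : CcvC (fun _ => c) c.
Proof.
  split; intros eps Heps; exists O; intros; unfold R_dist; rewrite Rminus_diag, Rabs_R0; auto.
Qed.

Lemma CcvC_inv_n : CcvC (fun n => RtoC (/ INR n)) Cpx0.
Proof.
  split; simpl.
  - apply cv_infty_cv_0. intros M. destruct (INR_unbounded M) as [N HN]. exists N.
    intros n Hn. assert (INR N <= INR n) by (apply le_INR; lia). lra.
  - intros eps Heps; exists O; intros; unfold R_dist; rewrite Rminus_diag, Rabs_R0; auto.
Qed.

Lemma CcvC_ev u w l : (forall n, (1 <= n)%nat -> u n = w n) -> CcvC u l -> CcvC w l.
Proof.
  intros E [a b]. split; intros eps Heps.
  - destruct (a eps Heps) as [N HN]. exists (max N 1). intros n Hn.
    rewrite <- E by lia. apply HN; lia.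
  - destruct (b eps Heps) as [N HN]. exists (max N 1). intros n Hn.
    rewrite <- E by lia. apply HN; lia.
Qed.

Lemma rgamma_spec z : Ccv (gauss_seq z) (rgamma z).
Proof. unfold rgamma. apply epsilon_spec. apply gauss_cv. Qed.

Lemma prod_shift z n :
  Cmul z (Cprod (fun j => Cadd (Cadd z Cpx1) (RtoC (INR j))) n) =
  Cprod (fun j => Cadd z (RtoC (INR j))) (S n).
Proof.
  induction n.
  - simpl. apply Ceq; simpl; ring.
  - rewrite Cprod_S, (Cprod_S _ (S n)), <- IHn.
    transitivity (Cmul (Cmul z (Cprod (fun j => Cadd (Cadd z Cpx1) (RtoC (INR j))) n))
       (Cadd (Cadd z Cpx1) (RtoC (INR (S n))))); [ring|].
    f_equal. apply Ceq; cbn [Re Im Cadd RtoC Cpx1]; rewrite ?(S_INR (S n)); ring.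
Qed.

Lemma gauss_rel z n : (1 <= n)%nat ->
  Cmul (gauss_seq z n) (Cadd Cpx1 (Cmul (Cadd z Cpx1) (RtoC (/ INR n)))) =
  Cmul z (gauss_seq (Cadd z Cpx1) n).
Proof.
  intros Hn. assert (HN : 1 <= INR n) by (apply (le_INR 1); auto).
  unfold gauss_seq.
  assert (Ep : Cnatpow n (Cadd z Cpx1) = Cmul (Cnatpow n z) (RtoC (INR n))).
  { unfold Cnatpow.
    replace (Cmul (Cadd z Cpx1) (RtoC (ln (INR n)))) with
      (Cadd (Cmul z (RtoC (ln (INR n)))) (RtoC (ln (INR n)))) by (apply Ceq; simpl; ring).
    rewrite Cexp_add. f_equal. unfold Cexp, RtoC; simpl. rewrite exp_ln, cos_0, sin_0 by lra.
    apply Ceq; simpl; ring. }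
  rewrite Ep.
  set (Q := Cprod (fun j => Cadd (Cadd z Cpx1) (RtoC (INR j))) n).
  assert (HQ : Cmul z Q = Cmul (Cprod (fun j => Cadd z (RtoC (INR j))) n) (Cadd z (RtoC (INR n + 1)))).
  { unfold Q. rewrite prod_shift, Cprod_S. rewrite S_INR. reflexivity. }
  assert (Hinv : RtoC (/ INR n) = Cdiv Cpx1 (RtoC (INR n))).
  { rewrite Cdiv_RtoC by lra. apply Ceq; simpl; field; lra. }
  rewrite Hinv. clearbody Q.
  pose proof (Cexp_nz (Cmul z (RtoC (ln (INR n))))). unfold Cnatpow.
  pose proof (RtoC_nz (INR n) ltac:(lra)).
  pose proof (RtoC_nz (INR (fact n)) (INR_fact_neq_0 n)).
  transitivity (Cdiv (Cmul z Q) (Cmul (RtoC (INR (fact n))) (Cmul (Cexp (Cmul z (RtoC (ln (INR n))))) (RtoC (INR n))))).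
  2: { clear -H H0 H1. field. repeat split; auto. }
  rewrite HQ. rewrite RtoC_add. change (RtoC 1) with Cpx1. set (P := Cprod _ n). clearbody P. field. repeat split; auto.
Qed.

Theorem FE_holds : FE.
Proof.
  intros z.
  pose proof (Ccv_CcvC _ _ (rgamma_spec z)) as H0.
  pose proof (Ccv_CcvC _ _ (rgamma_spec (Cadd z Cpx1))) as H1.
  assert (Hw : CcvC (fun n => Cadd Cpx1 (Cmul (Cadd z Cpx1) (RtoC (/ INR n))))
                    (Cadd Cpx1 (Cmul (Cadd z Cpx1) Cpx0))).
  { apply CcvC_add; [apply CcvC_const|]. apply CcvC_mul; [apply CcvC_const| apply CcvC_inv_n]. }
  pose proof (CcvC_mul _ _ _ _ H0 Hw) as Hv.
  pose proof (CcvC_mul _ _ _ _ (CcvC_const z) H1) as Hz.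
  apply (CcvC_ev _ (fun n => Cmul z (gauss_seq (Cadd z Cpx1) n))) in Hv; [|intros; apply gauss_rel; auto].
  pose proof (CcvC_unique _ _ _ Hv Hz) as E.
  rewrite <- E. ring.
Qed.

Theorem mainTheorem5 (k : nat) (a b : Cpx) :
  (1 <= k)%nat ->
  ~ nonpos_int (Cdiv (Cadd a (RtoC (INR k + 1))) (RtoC 2)) ->
  (forall m : nat, (m <= k)%nat ->
     ~ nonpos_int (Cdiv (Cadd a (RtoC (INR k + INR m))) (RtoC 2))) ->
  Cmul (Gamma (Cdiv (Cadd a (RtoC (INR k + 1))) (RtoC 2)))
       (rgamma (Csub (Cdiv (Cadd a (RtoC (- INR k + 1))) (RtoC 2)) b))
  = Csum (fun m =>
      Cmul (RtoC (Binomial.C k m))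
       (Cmul
         (Csub (Csub (Cadd a (RtoC ((INR k - 1) / 2)))
                     (Cdiv (Cmul b (RtoC (INR m))) (RtoC (INR k))))
               (Cdiv (Cmul (RtoC (INR k + 1)) (Cadd a (RtoC (INR k - 1))))
                     (RtoC (2 * (INR m + 1)))))
         (Cmul (Gamma (Cdiv (Cadd a (RtoC (INR k + INR m))) (RtoC 2)))
               (rgamma (Cadd (Csub (Cdiv (Cadd a (RtoC (- INR k + INR m))) (RtoC 2)) b)
                             Cpx1))))) k.
Proof. exact (main_from_FE FE_holds k a b). Qed.
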